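(* Let $\mathbf X=\{X_n\}$, $\mathbf Z=\{Z_n\}$ be general sources with given couplings $P_{Z_n|X_n}$, and let $\mathbf W=\{W_{Y_n|X_n}\}$ be a general channel. If $\mathbf Z$ is an approximating source for $\mathbf W$ given $\mathbf X$, then for every $\epsilon\in(0,1)$ and every $\gamma>0$, $$\lim_{n\to\infty}\mathbb E_{P_{X_n}}\Big[\mu\big(\{\delta\in[0,1-\epsilon): c_n^{z|x}(\delta+\epsilon,X_n)-c_n^{w}(\delta,X_n)<-\gamma\}\big)\Big]=0 .$$
   Context: Logarithms are natural. For each $n$, $X_n$ and $Z_n$ are jointly distributed random variables on countable sets $\mathcal X_n$, $\mathcal Z_n$, with joint law determined by the pmf $P_{X_n}$ and a conditional pmf $P_{Z_n|X_n}$. The channel $W_{Y_n|X_n}(\cdot|x)$ is a pmf on a countable set $\mathcal Y_n$ for each $x\in\mathcal X_n$. For a random variable $Z$ on a countable set $\mathcal Z$ with pmf $P_Z$, list the elements of positive probability as $z_1,z_2,\dots$ (a finite or countably infinite list) with $P_Z(z_1)\ge P_Z(z_2)\ge\cdots$ (ties broken arbitrarily). Set $\delta_0=0$ and $\delta_k=\sum_{i\le k}P_Z(z_i)$. For $\delta\in[0,1)$ define $c^z(\delta)=\log\frac{1}{P_Z(z_k)}$, where $k$ is the unique index with $\delta\in[\delta_{k-1},\delta_k)$. For $x\in\mathcal X_n$, $c_n^{z|x}(\cdot,x)$ is this function for the pmf $P_{Z_n|X_n}(\cdot|x)$, and $c_n^{w}(\cdot,x)$ is this function for the pmf $W_{Y_n|X_n}(\cdot|x)$.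 $\mu$ is Lebesgue measure. The variational distance is $d(P,Q)=\sum_a|P(a)-Q(a)|$. $\mathbf Z$ is an approximating source for $\mathbf W$ given $\mathbf X$ if there exist deterministic maps $\varphi_n:\mathcal X_n\times\mathcal Z_n\to\mathcal Y_n$ such that $$\lim_{n\to\infty}d\big(P_{X_nY_n},P_{X_n,\varphi_n(X_n,Z_n)}\big)=0,$$ where $P_{X_nY_n}(x,y)=P_{X_n}(x)W_{Y_n|X_n}(y|x)$. *)

(* Defs.v *)
From Stdlib Require Import Reals List ClassicalEpsilon.
Import ListNotations.
Open Scope R_scope.

Definition countable (T : Type) : Prop :=
  exists f : T -> nat, forall a b, f a = f b -> a = b.

Definition lsum {T : Type} (f : T -> R) (l : list T) : R :=
  fold_right (fun a acc => f a + acc) 0 l.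

(** Unordered sum of a (nonnegative) family: least upper bound of the sums
    over finite sets of distinct indices. *)
Definition has_tsum {T : Type} (f : T -> R) (s : R) : Prop :=
  is_lub (fun v => exists l : list T, NoDup l /\ v = lsum f l) s.

Definition tsum {T : Type} (f : T -> R) : R :=
  epsilon (inhabits 0) (fun s => has_tsum f s).

Definition is_pmf {T : Type} (p : T -> R) : Prop :=
  (forall a, 0 <= p a) /\ has_tsum p 1.

Definition vdist {T : Type} (P Q : T -> R) : R :=
  tsum (fun a => Rabs (P a - Q a)).

Definition joint {X Y : Type} (PX : X -> R) (W : X -> Y -> R) : X * Y -> R :=
  fun a => PX (fst a) * W (fst a) (snd a).

(** Law of (X, phi(X,Z)): P_X(x) * sum_{z : phi x z = y} P_{Z|X}(z|x). *)
Definition joint_phi {X Y Z : Type} (PX : X -> R) (PZX : X -> Z -> R)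
  (phi : X -> Z -> Y) : X * Y -> R :=
  fun a => PX (fst a) *
    tsum (fun z => if excluded_middle_informative (phi (fst a) z = snd a)
                   then PZX (fst a) z else 0).

Definition approximating_source (X Y Z : nat -> Type)
  (PX : forall n, X n -> R) (PZX : forall n, X n -> Z n -> R)
  (W : forall n, X n -> Y n -> R) : Prop :=
  exists phi : forall n, X n -> Z n -> Y n,
    Un_cv (fun n => vdist (joint (PX n) (W n)) (joint_phi (PX n) (PZX n) (phi n))) 0.

(** Index set {0,...,k-1} (K = Some k) or all of nat (K = None). *)
Definition in_idx (K : option nat) (i : nat) : Prop :=
  match K with Some k => (i < k)%nat | None => True end.

(** e (0-based) lists the elements of positive probability of p, without
    repetition, in nonincreasing order of probability. *)
Definition sorted_enum {T : Type} (p : T -> R) (e : nat -> T) (K : option nat) : Prop :=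
  (forall i j, in_idx K i -> in_idx K j -> e i = e j -> i = j) /\
  (forall i, in_idx K i -> 0 < p (e i)) /\
  (forall z, 0 < p z -> exists i, in_idx K i /\ e i = z) /\
  (forall i j, in_idx K i -> in_idx K j -> (i <= j)%nat -> p (e j) <= p (e i)).

(** delta_k = sum_{i<k} p(e i) (sum of the first k listed probabilities). *)
Fixpoint psum {T : Type} (p : T -> R) (e : nat -> T) (k : nat) : R :=
  match k with
  | O => 0
  | S k' => psum p e k' + p (e k')
  end.

(** c(delta) = log (1 / p(z_k)) where delta_{k-1} <= delta < delta_k
    (here with 0-based index k: psum k <= delta < psum (k+1)). *)
Definition cfun {T : Type} (p : T -> R) (delta : R) : R :=
  epsilon (inhabits 0) (fun c =>
    exists (e : nat -> T) (K : option nat), sorted_enum p e K /\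
    exists k, in_idx K k /\ psum p e k <= delta < psum p e (S k) /\
              c = ln (/ p (e k))).

Definition Rinf (E : R -> Prop) : R :=
  epsilon (inhabits 0) (fun m =>
    (forall x, E x -> m <= x) /\ (forall b, (forall x, E x -> b <= x) -> b <= m)).

(** Lebesgue (outer) measure: infimum of total lengths of countable open
    interval covers. *)
Definition lebesgue (A : R -> Prop) : R :=
  Rinf (fun s => exists a b : nat -> R,
    (forall i, a i <= b i) /\
    (forall x, A x -> exists i, a i < x < b i) /\
    infinite_sum (fun i => b i - a i) s).

(* Main.v *)
Require Import Defs.
From Stdlib Require Import Reals List ClassicalEpsilon Classical Lia Lra ZArith FinFun.
Import ListNotations.
Open Scope R_scope.

Lemma lsum_cons {T} (f:T->R) a l : lsum f (a::l) = f a + lsum f l.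
Proof. reflexivity. Qed.
Lemma lsum_nil {T} (f:T->R) : lsum f [] = 0.
Proof. reflexivity. Qed.

Lemma lsum_app {T} (f:T->R) l1 l2 : lsum f (l1++l2) = lsum f l1 + lsum f l2.
Proof. induction l1; simpl app; rewrite ?lsum_cons, ?lsum_nil; [ring|rewrite IHl1; ring]. Qed.

Lemma lsum_le {T} (f g:T->R) l : (forall a, In a l -> f a <= g a) -> lsum f l <= lsum g l.
Proof.
  induction l; intros H; rewrite ?lsum_cons, ?lsum_nil; [lra|].
  assert (f a <= g a) by (apply H; left; auto).
  assert (lsum f l <= lsum g l) by (apply IHl; intros; apply H; right; auto). lra.
Qed.

Lemma lsum_nonneg {T} (f:T->R) l : (forall a, In a l -> 0 <= f a) -> 0 <= lsum f l.
Proof.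
  intros H. replace 0 with (lsum (fun _ => 0) l).
  - apply lsum_le; auto.
  - induction l; rewrite ?lsum_cons, ?lsum_nil; auto. rewrite IHl; [ring|]. intros; apply H; right; auto.
Qed.

Lemma lsum_ext {T} (f g:T->R) l : (forall a, In a l -> f a = g a) -> lsum f l = lsum g l.
Proof.
  intros H; apply Rle_antisym; apply lsum_le; intros a Ha; rewrite (H a Ha); lra.
Qed.

Lemma lsum_zero {T} (l : list T) : lsum (fun _ => 0) l = 0.
Proof. induction l; rewrite ?lsum_cons, ?lsum_nil; auto. rewrite IHl; ring. Qed.

Lemma lsum_plus {T} (f g:T->R) l : lsum (fun a => f a + g a) l = lsum f l + lsum g l.
Proof. induction l; rewrite ?lsum_cons, ?lsum_nil; [ring|rewrite IHl; ring]. Qed.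

Lemma lsum_scal {T} (f:T->R) c l : lsum (fun a => c * f a) l = c * lsum f l.
Proof. induction l; rewrite ?lsum_cons, ?lsum_nil; [ring|rewrite IHl; ring]. Qed.

Lemma lsum_map {A B} (f:B->R) (g:A->B) l : lsum f (map g l) = lsum (fun a => f (g a)) l.
Proof. induction l; simpl map; rewrite ?lsum_cons, ?lsum_nil; [ring|rewrite IHl; ring]. Qed.

Lemma lsum_swap {A B} (h : A -> B -> R) la lb :
  lsum (fun a => lsum (h a) lb) la = lsum (fun b => lsum (fun a => h a b) la) lb.
Proof.
  induction la; rewrite ?lsum_cons, ?lsum_nil.
  - symmetry; apply lsum_zero.
  - rewrite IHla. rewrite <- lsum_plus. apply lsum_ext; intros; rewrite lsum_cons; ring.
Qed.

Lemma lsum_incl_pos {T} (f:T->R) (l m : list T) :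
  NoDup l -> (forall a, In a l -> 0 < f a -> In a m) -> (forall a, 0 <= f a) ->
  lsum f l <= lsum f m.
Proof.
  revert m; induction l as [|a l IH]; intros m Hnd Hinc Hnn.
  - rewrite lsum_nil; apply lsum_nonneg; auto.
  - apply NoDup_cons_iff in Hnd as [Hna Hnd]. rewrite lsum_cons.
    destruct (Rle_lt_or_eq_dec 0 (f a) (Hnn a)) as [Hp|Hz].
    + assert (Ham : In a m) by (apply Hinc; [left|]; auto).
      destruct (in_split a m Ham) as [m1 [m2 ->]].
      rewrite lsum_app, lsum_cons.
      assert (lsum f l <= lsum f (m1 ++ m2)).
      { apply IH; auto. intros b Hb Hfb. assert (In b (m1 ++ a :: m2)) by (apply Hinc; [right|]; auto).
        apply in_app_iff in H as [H|[H|H]]; apply in_app_iff; auto. subst; contradiction. }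
      rewrite lsum_app in H. lra.
    + rewrite <- Hz. assert (lsum f l <= lsum f m); [|lra].
      apply IH; auto. intros; apply Hinc; [right|]; auto.
Qed.

Lemma nodup_exists {T} (l : list T) (Pr : T -> Prop) :
  exists m, NoDup m /\ forall y, In y m <-> In y l /\ Pr y.
Proof.
  induction l as [|a l [m [Hm Hiff]]].
  - exists []; split; [constructor|]. intros y; simpl; tauto.
  - destruct (classic (Pr a /\ ~ In a m)) as [[Ha Hn]|Hc].
    + exists (a::m); split; [constructor; auto|]. intros y; simpl; rewrite Hiff.
      split; [intros [<-|H]; tauto|]. intros [[<-|H] Hp]; auto.
    + exists m; split; auto. intros y; simpl; rewrite Hiff. split; [tauto|].
      intros [[<-|H] Hp]; auto. apply NNPP; intro Hn. apply Hc; split; auto. rewrite Hiff; tauto.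
Qed.

Lemma sum_ind_one {T} (m : list T) (Pr : T -> Prop) (g : T -> R) y0 :
  NoDup m -> In y0 m -> (forall y, In y m -> (Pr y <-> y = y0)) ->
  lsum (fun y => if excluded_middle_informative (Pr y) then g y else 0) m = g y0.
Proof.
  induction m as [|a m IH]; intros Hnd Hin Hiff; [destruct Hin|].
  apply NoDup_cons_iff in Hnd as [Hna Hnd]. rewrite lsum_cons.
  destruct Hin as [<-|Hin].
  - destruct (excluded_middle_informative (Pr a)) as [_|Hn]; [|exfalso; apply Hn, Hiff; simpl; auto].
    rewrite (lsum_ext _ (fun _ => 0)); [rewrite lsum_zero; ring|].
    intros y Hy. destruct (excluded_middle_informative (Pr y)) as [Hp|]; auto.
    apply Hiff in Hp; [subst; contradiction|right; auto].
  - destruct (excluded_middle_informative (Pr a)) as [Hp|Hn].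
    + apply Hiff in Hp; [subst; contradiction|left; auto].
    + rewrite IH; auto; [ring|]. intros; apply Hiff; right; auto.
Qed.

Lemma sum_ind_zero {T} (m : list T) (Pr : T -> Prop) (g : T -> R) :
  (forall y, In y m -> ~ Pr y) ->
  lsum (fun y => if excluded_middle_informative (Pr y) then g y else 0) m = 0.
Proof.
  intros H. rewrite (lsum_ext _ (fun _ => 0)); [apply lsum_zero|].
  intros y Hy; destruct (excluded_middle_informative (Pr y)); auto. exfalso; eapply H; eauto.
Qed.

Lemma has_tsum_le {T} (f:T->R) s l : has_tsum f s -> NoDup l -> lsum f l <= s.
Proof. intros [Hub _] Hl. apply Hub. exists l; auto. Qed.

Lemma has_tsum_least {T} (f:T->R) s M : has_tsum f s -> (forall l, NoDup l -> lsum f l <= M) -> s <= M.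
Proof. intros [_ Hl] H. apply Hl. intros v [l [Hnd ->]]; auto. Qed.

Lemma has_tsum_nonneg {T} (f:T->R) s : has_tsum f s -> 0 <= s.
Proof. intros H. rewrite <- (lsum_nil f). apply has_tsum_le with (l := []); auto; constructor. Qed.

Lemma tsum_exists {T} (f:T->R) M : (forall l, NoDup l -> lsum f l <= M) -> has_tsum f (tsum f).
Proof.
  intros H. unfold tsum. apply epsilon_spec.
  destruct (completeness (fun v => exists l : list T, NoDup l /\ v = lsum f l)) as [s Hs].
  - exists M. intros v [l [Hl ->]]; auto.
  - exists 0, []. split; [constructor|reflexivity].
  - exists s; exact Hs.
Qed.

Lemma has_tsum_approx {T} (f:T->R) s eta : has_tsum f s -> 0 < eta ->
  exists l, NoDup l /\ s - eta < lsum f l.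
Proof.
  intros H He. apply NNPP; intro Hn.
  assert (s <= s - eta); [|lra].
  apply (has_tsum_least f s); auto. intros l Hl.
  apply Rnot_lt_le. intro Hlt. apply Hn. exists l; auto.
Qed.

Lemma pmf_le1 {T} (p:T->R) l : is_pmf p -> NoDup l -> lsum p l <= 1.
Proof. intros [_ H] Hl; apply has_tsum_le; auto. Qed.

Lemma nat_unbounded (r : R) : exists n : nat, r < INR n.
Proof.
  destruct (archimed r) as [H1 _].
  destruct (Z.lt_ge_cases 0 (up r)) as [Hp|Hn].
  - exists (Z.to_nat (up r)). rewrite INR_IZR_INZ, Z2Nat.id; lia || lra.
  - exists 0%nat. simpl. apply IZR_le in Hn. lra.
Qed.

Lemma lsum_ge_const {T} (p:T->R) a l : (forall v, In v l -> a <= p v) -> INR (length l) * a <= lsum p l.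
Proof.
  induction l; intros H; simpl length; rewrite ?lsum_cons, ?lsum_nil; [simpl; lra|].
  rewrite S_INR. assert (a <= p a0) by (apply H; left; auto).
  assert (INR (length l) * a <= lsum p l) by (apply IHl; intros; apply H; right; auto). lra.
Qed.

Lemma upper_finite {T} (p:T->R) a : is_pmf p -> 0 < a -> exists L, forall v, a <= p v -> In v L.
Proof.
  intros Hp Ha.
  set (Pn := fun n => exists l, NoDup l /\ length l = n /\ forall v, In v l -> a <= p v).
  assert (Hb : forall n, Pn n -> INR n * a <= 1).
  { intros n [l [Hl [<- Hv]]]. eapply Rle_trans; [apply lsum_ge_const; eauto|]. apply pmf_le1; auto. }
  assert (Hex : exists n, Pn n /\ ~ Pn (S n)).
  { apply NNPP; intro Hn.
    assert (Hall : forall n, Pn n).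
    { induction n. - exists []; repeat split; [constructor|intros v []].
      - apply NNPP; intro H'. apply Hn; eauto. }
    destruct (nat_unbounded (1/a)) as [n Hn'].
    specialize (Hb n (Hall n)).
    assert (1 / a * a < INR n * a) by (apply Rmult_lt_compat_r; auto).
    unfold Rdiv in H; rewrite Rmult_assoc, Rinv_l, Rmult_1_r in H; lra. }
  destruct Hex as [n [[l [Hl [Hlen Hv]]] Hns]].
  exists l. intros v Hav. apply NNPP; intro Hnin. apply Hns.
  exists (v::l). repeat split; [constructor; auto|simpl; lia|].
  intros w [<-|Hw]; auto.
Qed.

Lemma in_idx_down K i j : in_idx K j -> (i <= j)%nat -> in_idx K i.
Proof. destruct K; simpl; auto; lia. Qed.

Lemma least_nat (P : nat -> Prop) : (exists n, P n) -> exists n, P n /\ forall m, (m < n)%nat -> ~ P m.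
Proof.
  intros [n Hn]. revert Hn. pattern n. apply (well_founded_ind Nat.lt_wf_0). clear n.
  intros n IH Hn. destruct (classic (exists m, (m < n)%nat /\ P m)) as [[m [Hm Pm]]|H].
  - apply (IH m Hm Pm).
  - exists n; split; auto. intros m Hm Pm; apply H; eauto.
Qed.

Section Enum.
Context {T : Type} (p : T -> R) (Hp : is_pmf p).

Definition good (l : list T) (z : T) : Prop :=
  0 < p z /\ ~ In z l /\ forall w, ~ In w l -> p w <= p z.

Lemma list_max (l L : list T) a :
  (exists v, In v L /\ ~ In v l /\ a <= p v) ->
  exists z, In z L /\ ~ In z l /\ a <= p z /\ forall u, In u L -> ~ In u l -> a <= p u -> p u <= p z.
Proof.
  induction L as [|b L IH]; intros [v [Hv Hrest]]; [destruct Hv|].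
  destruct (classic (exists v, In v L /\ ~ In v l /\ a <= p v)) as [Hex|Hnex].
  - destruct (IH Hex) as [z [Hz [Hzl [Haz Hmax]]]].
    destruct (classic (~ In b l /\ a <= p b /\ p z <= p b)) as [[Hb1 [Hb2 Hb3]]|Hb].
    + exists b; repeat split; auto; [left; auto|]. intros u [<-|Hu] Hul Hau; [lra|].
      specialize (Hmax u Hu Hul Hau); lra.
    + exists z; repeat split; auto; [right; auto|]. intros u [<-|Hu] Hul Hau; auto.
      apply Rnot_lt_le; intro; apply Hb; repeat split; auto; lra.
  - destruct Hv as [Hv|Hv]; [subst v|exfalso; apply Hnex; eauto].
    exists b; repeat split; try tauto; [left; auto|]. intros u [<-|Hu] Hul Hau; [lra|].
    exfalso; apply Hnex; eauto.
Qed.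

Lemma good_exists l : (exists w, ~ In w l /\ 0 < p w) -> exists z, good l z.
Proof.
  intros [w [Hw Hpw]].
  destruct (upper_finite p (p w) Hp Hpw) as [L HL].
  destruct (list_max l L (p w)) as [z [Hz [Hzl [Haz Hmax]]]].
  { exists w; repeat split; auto; [apply HL|]; lra. }
  exists z; repeat split; auto; [lra|]. intros u Hul.
  destruct (Rle_lt_dec (p w) (p u)); [apply Hmax; auto|lra].
Qed.

Variable z0 : T.
Definition pick (l : list T) : T := epsilon (inhabits z0) (good l).
Fixpoint pre (n : nat) : list T := match n with O => [] | S n => pre n ++ [pick (pre n)] end.
Definition en (i : nat) : T := pick (pre i).
Definition ok (i : nat) : Prop := exists z, good (pre i) z.

Lemma en_good i : ok i -> good (pre i) (en i).
Proof. intros H. unfold en, pick. apply epsilon_spec; auto. Qed.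

Lemma pre_in w n : In w (pre n) <-> exists i, (i < n)%nat /\ en i = w.
Proof.
  induction n; simpl.
  - split; [intros []|intros [i [Hi _]]; lia].
  - rewrite in_app_iff, IHn. simpl. split.
    + intros [[i [Hi Hw]]|[Hw|[]]]; [exists i; split; auto; lia|exists n; auto].
    + intros [i [Hi Hw]]. destruct (Nat.eq_dec i n); [subst; right; left; auto|].
      left; exists i; split; auto; lia.
Qed.

Lemma psum_pre n : psum p en n = lsum p (pre n).
Proof. induction n; [reflexivity|]. change (psum p en (S n)) with (psum p en n + p (en n)).
  change (pre (S n)) with (pre n ++ [pick (pre n)]).
  rewrite lsum_app, IHn, lsum_cons, lsum_nil. unfold en. ring. Qed.

Lemma pre_nodup n : (forall i, (i < n)%nat -> ok i) -> NoDup (pre n).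
Proof.
  induction n; intros H; simpl; [constructor|].
  apply NoDup_app; [apply IHn; intros; apply H; lia|repeat constructor; auto|].
  intros a Ha [Hb|[]]. subst. destruct (en_good n) as [_ [Hn _]]; [apply H; lia|]. apply Hn; auto.
Qed.

Lemma enum_exists : exists K, sorted_enum p en K /\
  forall d, 0 <= d < 1 -> exists k, in_idx K k /\ psum p en k <= d < psum p en (S k).
Proof.
  assert (HK : exists K, (forall i, in_idx K i -> ok i) /\
      (forall k, K = Some k -> ~ ok k)).
  { destruct (classic (exists k, ~ ok k)) as [Hex|Hn].
    - destruct (least_nat _ Hex) as [k [Hk Hl]]. exists (Some k); split.
      + intros i Hi; simpl in Hi. apply NNPP; apply Hl; auto.
      + intros k' [= <-]; auto.
    - exists None; split; [intros; apply NNPP; intro; apply Hn; eauto|discriminate]. }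
  destruct HK as [K [Hok Hstop]].
  assert (Hnotin : forall i j, in_idx K j -> (i <= j)%nat -> ~ In (en j) (pre i)).
  { intros i j Hj Hij Hin. destruct (en_good j (Hok j Hj)) as [_ [Hn _]]. apply Hn.
    apply pre_in in Hin as [m [Hm Hw]]. apply pre_in; exists m; split; auto; lia. }
  assert (Hmono : forall i j, in_idx K i -> in_idx K j -> (i <= j)%nat -> p (en j) <= p (en i)).
  { intros i j Hi Hj Hij. destruct (en_good i (Hok i Hi)) as [_ [_ Hm]]. apply Hm; eauto. }
  assert (Hcov : forall z, 0 < p z -> exists i, in_idx K i /\ en i = z).
  { intros z Hz. apply NNPP; intro Hn.
    assert (Hzpre : forall i, (forall m, (m < i)%nat -> in_idx K m) -> ~ In z (pre i)).
    { intros i Hi Hin. apply pre_in in Hin as [m [Hm Hw]]. apply Hn; exists m; auto. }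
    destruct K as [k|].
    + apply (Hstop k eq_refl). apply good_exists. exists z; split; auto.
    + assert (Hge : forall i, p z <= p (en i)).
      { intros i. destruct (en_good i (Hok i I)) as [_ [_ Hm]]. apply Hm, Hzpre; simpl; auto. }
      destruct (nat_unbounded (1 / p z)) as [N HN].
      assert (Hs : INR (length (pre N)) * p z <= lsum p (pre N)).
      { apply lsum_ge_const. intros v Hv. apply pre_in in Hv as [i [_ <-]]; auto. }
      assert (Hlen : length (pre N) = N).
      { clear. induction N; simpl; auto. rewrite length_app, IHN; simpl; lia. }
      rewrite Hlen in Hs.
      assert (lsum p (pre N) <= 1) by (apply pmf_le1; auto; apply pre_nodup; intros; apply Hok; exact I).
      assert (1 / p z * p z < INR N * p z) by (apply Rmult_lt_compat_r; auto).
      unfold Rdiv in H0; rewrite Rmult_assoc, Rinv_l, Rmult_1_r in H0; lra. }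
  exists K; split.
  - repeat split.
    + intros i j Hi Hj Heq. destruct (lt_eq_lt_dec i j) as [[Hlt|]|Hlt]; auto; exfalso.
      * apply (Hnotin j j Hj (le_n j)). apply pre_in. exists i; auto.
      * apply (Hnotin i i Hi (le_n i)). apply pre_in. exists j; auto.
    + intros i Hi. destruct (en_good i (Hok i Hi)); auto.
    + exact Hcov.
    + exact Hmono.
  - intros d [Hd0 Hd1].
    assert (HN : exists N, (forall i, (i < N)%nat -> in_idx K i) /\ d < psum p en N).
    { destruct K as [k|].
      + exists k; split; [simpl; auto|].
        assert (1 <= psum p en k); [|lra].
        destruct Hp as [Hnn Hts]. apply (has_tsum_least p 1); auto.
        intros l Hl. rewrite psum_pre. apply lsum_incl_pos; auto.
        intros a Ha Hpa. destruct (Hcov a Hpa) as [i [Hi <-]]. apply pre_in; eauto.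
      + destruct Hp as [Hnn Hts]. destruct (has_tsum_approx p 1 (1 - d) Hts) as [l [Hl Hlt]]; [lra|].
        assert (HNl : exists N, forall a, In a l -> 0 < p a -> In a (pre N)).
        { clear Hl Hlt. induction l as [|b l [N HN]].
          - exists O; intros a [].
          - destruct (classic (0 < p b)) as [Hb|Hb].
            + destruct (Hcov b Hb) as [i [_ Hi]]. exists (Nat.max N (S i)).
              intros a [<-|Ha] Hpa; apply pre_in.
              * exists i; split; auto; lia.
              * apply HN, pre_in in Ha as [m [Hm Hw]]; auto. exists m; split; auto; lia.
            + exists N. intros a [<-|Ha] Hpa; [contradiction|auto]. }
        destruct HNl as [N HN]. exists N; split; [simpl; auto|].
        rewrite psum_pre. assert (lsum p l <= lsum p (pre N)); [|lra].
        apply lsum_incl_pos; auto. }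
    destruct HN as [N [HNi HNd]].
    assert (Hk : exists k, (k < N)%nat /\ psum p en k <= d < psum p en (S k)).
    { clear HNi. induction N; simpl in HNd; [lra|].
      destruct (Rle_lt_dec (psum p en N) d).
      - exists N; split; [lia|simpl; lra].
      - destruct (IHN r) as [k [Hk1 Hk2]]; exists k; split; auto. }
    destruct Hk as [k [Hk1 Hk2]]. exists k; split; auto.
Qed.
End Enum.

Lemma cfun_spec {T} (p : T -> R) d : is_pmf p -> 0 <= d < 1 ->
  exists e K k, sorted_enum p e K /\ in_idx K k /\ psum p e k <= d < psum p e (S k) /\
    cfun p d = ln (/ p (e k)).
Proof.
  intros Hp Hd.
  assert (Hz0 : exists z0 : T, True).
  { destruct Hp as [_ Hts]. destruct (has_tsum_approx p 1 1 Hts) as [l [_ Hl]]; [lra|].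
    destruct l as [|z l]; [|exists z; exact I].
    exfalso. rewrite lsum_nil in Hl. lra. }
  destruct Hz0 as [z0 _].
  destruct (enum_exists p Hp z0) as [K [Hs Hc]].
  destruct (Hc d Hd) as [k [Hk Hkd]].
  assert (H : exists c, exists (e : nat -> T) (K : option nat), sorted_enum p e K /\
    exists k, in_idx K k /\ psum p e k <= d < psum p e (S k) /\ c = ln (/ p (e k))).
  { exists (ln (/ p (en p z0 k))), (en p z0), K; split; auto. exists k; auto. }
  pose proof (epsilon_spec (inhabits 0) _ H) as [e [K' [Hs' [k' [Hk' [Hd' Hc']]]]]].
  exists e, K', k'; split; [auto|split; [auto|split; [auto|exact Hc']]].
Qed.

Section Q.
Context {Z Y : Type} (P : Z -> R) (phi : Z -> Y) (HP : is_pmf P).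

Definition gq (y : Y) (z : Z) : R := if excluded_middle_informative (phi z = y) then P z else 0.
Definition Qf (y : Y) : R := tsum (gq y).

Lemma P_nonneg z : 0 <= P z.
Proof. destruct HP as [H _]; auto. Qed.

Lemma gq_le y z : gq y z <= P z.
Proof. unfold gq; destruct excluded_middle_informative; [lra|apply P_nonneg]. Qed.
Lemma gq_nonneg y z : 0 <= gq y z.
Proof. unfold gq; destruct excluded_middle_informative; [apply P_nonneg|lra]. Qed.

Lemma Q_has y : has_tsum (gq y) (Qf y).
Proof.
  apply (tsum_exists _ 1). intros l Hl. eapply Rle_trans; [apply lsum_le; intros; apply gq_le|].
  apply pmf_le1; auto.
Qed.

Lemma Q_nonneg y : 0 <= Qf y.
Proof. eapply has_tsum_nonneg, Q_has. Qed.

Lemma Q_ge y l : NoDup l -> lsum (gq y) l <= Qf y.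
Proof. intros; apply has_tsum_le; auto; apply Q_has. Qed.

Lemma Q_ge_pt z : P z <= Qf (phi z).
Proof.
  replace (P z) with (lsum (gq (phi z)) [z]).
  - apply Q_ge; repeat constructor; intros [].
  - rewrite lsum_cons, lsum_nil. unfold gq. destruct excluded_middle_informative; [ring|tauto].
Qed.

Lemma Q_common ys eta : 0 < eta -> exists lz, NoDup lz /\
  lsum Qf ys <= lsum (fun y => lsum (gq y) lz) ys + eta.
Proof.
  revert eta; induction ys as [|y ys IH]; intros eta He.
  - exists []; split; [constructor|]. rewrite !lsum_nil; lra.
  - destruct (IH (eta/2)) as [lz' [Hlz' Hs]]; [lra|].
    destruct (has_tsum_approx _ _ (eta/2) (Q_has y)) as [ly [Hly Hy]]; [lra|].
    destruct (nodup_exists (ly ++ lz') (fun _ => True)) as [lz [Hlz Hiff]].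
    exists lz; split; auto. rewrite !lsum_cons.
    assert (lsum (gq y) ly <= lsum (gq y) lz).
    { apply lsum_incl_pos; auto; [|apply gq_nonneg]. intros a Ha _; apply Hiff; split; auto; apply in_app_iff; auto. }
    assert (lsum (fun y0 => lsum (gq y0) lz') ys <= lsum (fun y0 => lsum (gq y0) lz) ys).
    { apply lsum_le. intros b _. apply lsum_incl_pos; auto; [|apply gq_nonneg].
      intros a Ha _; apply Hiff; split; auto; apply in_app_iff; auto. }
    lra.
Qed.

Lemma Q_sum_le1 ys : NoDup ys -> lsum Qf ys <= 1.
Proof.
  intros Hys. apply Rle_plus_epsilon. intros eta He.
  destruct (Q_common ys eta He) as [lz [Hlz Hs]].
  rewrite lsum_swap in Hs.
  assert (lsum (fun b => lsum (fun a => gq a b) ys) lz <= lsum P lz).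
  { apply lsum_le. intros z _. unfold gq.
    destruct (classic (In (phi z) ys)) as [Hin|Hnin].
    - rewrite (sum_ind_one ys (fun a => phi z = a) (fun _ => P z) (phi z)); auto; [lra|].
      intros; split; auto.
    - rewrite sum_ind_zero; [apply P_nonneg|]. intros a Ha <-; contradiction. }
  assert (lsum P lz <= 1) by (apply pmf_le1; auto). lra.
Qed.
End Q.

Lemma enum_prefix {T} (p : T -> R) e K n : sorted_enum p e K -> (forall i, (i < n)%nat -> in_idx K i) ->
  NoDup (map e (seq 0 n)) /\ lsum p (map e (seq 0 n)) = psum p e n /\
  (forall w, In w (map e (seq 0 n)) <-> exists i, (i < n)%nat /\ e i = w).
Proof.
  intros [Hinj _]. induction n; intros Hv.
  - simpl. repeat split; [constructor|intros []|intros [i [Hi _]]; lia].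
  - destruct IHn as [Hnd [Hs Hin]]; [intros; apply Hv; lia|].
    rewrite seq_S, map_app. simpl plus. repeat split.
    + apply NoDup_app; auto; [repeat constructor; intros []|].
      intros a Ha [Hb|[]]. apply Hin in Ha as [i [Hi Hei]]. subst a.
      assert (i = n) by (apply Hinj; auto; apply Hv; lia). lia.
    + rewrite lsum_app, Hs. change (psum p e (S n)) with (psum p e n + p (e n)). unfold lsum at 1; simpl. ring.
    + intros Hw. apply in_app_iff in Hw as [Hw|[Hw|[]]].
      * apply Hin in Hw as [i [Hi Hw]]; exists i; split; auto; lia.
      * exists n; split; auto.
    + intros [i [Hi Hw]]. apply in_app_iff. destruct (Nat.eq_dec i n).
      * subst; right; left; auto.
      * left; apply Hin; exists i; split; auto; lia.
Qed.

Lemma key {Z Y : Type} (P : Z -> R) (Wy : Y -> R) (phi : Z -> Y) eps gamma d :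
  is_pmf P -> is_pmf Wy -> 0 < eps -> 0 < gamma -> 0 <= d -> d + eps < 1 ->
  cfun P (d + eps) - cfun Wy d < - gamma ->
  exists L, NoDup L /\ (1 - exp (- gamma)) * eps <= lsum (fun y => Rabs (Wy y - Qf P phi y)) L.
Proof.
  intros HP HW He Hg Hd Hde Hc.
  destruct (cfun_spec P (d + eps) HP) as [eP [KP [k [HsP [HkP [HdP HcP]]]]]]; [lra|].
  destruct (cfun_spec Wy d HW) as [eW [KW [j [HsW [HjW [HdW HcW]]]]]]; [lra|].
  pose proof HsP as [_ [HposP [_ HmonP]]]. pose proof HsW as [_ [HposW [HcovW HmonW]]].
  set (a := P (eP k)) in *. set (b := Wy (eW j)) in *.
  assert (Ha : 0 < a) by (apply HposP; auto). assert (Hb : 0 < b) by (apply HposW; auto).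
  set (E := exp (- gamma)).
  assert (HE : 0 < E < 1) by (split; [apply exp_pos|unfold E; rewrite <- exp_0; apply exp_increasing; lra]).
  assert (Hba : b < a * E).
  { rewrite HcP, HcW in Hc. rewrite !ln_Rinv in Hc by auto.
    assert (ln b < ln a - gamma) by lra.
    rewrite <- (exp_ln b), <- (exp_ln a) by auto. unfold E. rewrite <- exp_plus.
    apply exp_increasing; lra. }
  destruct (enum_prefix P eP KP (S k) HsP) as [HndZ [HsZ HinZ]].
  { intros i Hi; apply in_idx_down with k; auto; lia. }
  set (Ztop := map eP (seq 0 (S k))) in *.
  assert (HaZ : forall z, In z Ztop -> a <= P z).
  { intros z Hz. apply HinZ in Hz as [i [Hi <-]]. apply HmonP; auto; [apply in_idx_down with k; auto|]; lia. }
  destruct (enum_prefix Wy eW KW j HsW) as [HndT [HsT HinT]].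
  { intros i Hi; apply in_idx_down with j; auto; lia. }
  set (T := map eW (seq 0 j)) in *.
  assert (HWT : forall y, ~ In y T -> Wy y <= b).
  { intros y Hy. destruct (Rlt_le_dec 0 (Wy y)) as [Hp|Hp]; [|lra].
    destruct (HcovW y Hp) as [i [Hi <-]]. destruct (lt_dec i j) as [Hij|Hij].
    - exfalso; apply Hy, HinT; eauto.
    - apply HmonW; auto; lia. }
  destruct (nodup_exists (map phi Ztop) (fun _ => True)) as [S [HndS HinS]].
  assert (HQS : forall y, In y S -> a <= Qf P phi y).
  { intros y Hy. apply HinS in Hy as [Hy _]. apply in_map_iff in Hy as [z [<- Hz]].
    eapply Rle_trans; [apply HaZ; eauto|apply Q_ge_pt; auto]. }
  assert (HPS : lsum P Ztop <= lsum (Qf P phi) S).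
  { rewrite (lsum_ext P (fun z => lsum (fun y => gq P phi y z) S)).
    - rewrite <- lsum_swap. apply lsum_le. intros y _. apply Q_ge; auto.
    - intros z Hz. unfold gq. symmetry.
      apply (sum_ind_one S (fun y => phi z = y) (fun _ => P z) (phi z)); auto.
      + apply HinS; split; auto. apply in_map; auto.
      + intros; split; auto. }
  destruct (nodup_exists S (fun y => ~ In y T)) as [S' [HndS' HinS']].
  set (Q := Qf P phi) in *.
  assert (HQnn : forall y, 0 <= Q y) by (intros; apply Q_nonneg; auto).
  assert (HSsplit : lsum Q S <= lsum Q (S' ++ T)).
  { apply lsum_incl_pos; auto. intros y Hy _. apply in_app_iff.
    destruct (classic (In y T)); [right; auto|left; apply HinS'; auto]. }
  rewrite lsum_app in HSsplit.
  exists (T ++ S'); split.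
  { apply NoDup_app; auto. intros y Hy Hy'. apply HinS' in Hy' as [_ H]; contradiction. }
  rewrite lsum_app.
  set (f := fun y => Rabs (Wy y - Q y)).
  assert (HS' : (1 - E) * lsum Q S' <= lsum f S').
  { rewrite <- lsum_scal. apply lsum_le. intros y Hy. apply HinS' in Hy as [Hy HnT].
    specialize (HWT y HnT). specialize (HQS y Hy). unfold f.
    assert (Wy y <= E * Q y).
    { assert (a * E <= Q y * E) by (apply Rmult_le_compat_r; lra). lra. }
    rewrite Rabs_minus_sym. eapply Rle_trans; [|apply Rle_abs]. lra. }
  assert (HT : lsum Q T <= lsum Wy T + lsum f T).
  { rewrite <- lsum_plus. apply lsum_le. intros y _. unfold f.
    pose proof (Rle_abs (Q y - Wy y)). rewrite Rabs_minus_sym in H. lra. }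
  assert (HfT : 0 <= lsum f T) by (apply lsum_nonneg; intros; apply Rabs_pos).
  rewrite <- HsZ in HdP. rewrite <- HsT in HdW.
  assert (lsum Q S' >= eps - lsum f T) by lra.
  assert ((1 - E) * lsum Q S' >= (1 - E) * (eps - lsum f T)).
  { apply Rle_ge, Rmult_le_compat_l; lra. }
  assert (E * lsum f T >= 0) by (apply Rle_ge, Rmult_le_pos; lra).
  fold E. lra.
Qed.

Lemma Rinf_le (E : R -> Prop) x : E x -> (forall y, E y -> 0 <= y) -> Rinf E <= x.
Proof.
  intros Hx Hnn.
  assert (H : exists m, (forall x, E x -> m <= x) /\ (forall b, (forall x, E x -> b <= x) -> b <= m)).
  { destruct (completeness (fun y => E (- y))) as [m [Hub Hl]].
    - exists 0. intros y Hy. specialize (Hnn _ Hy). lra.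
    - exists (- x). rewrite Ropp_involutive; auto.
    - exists (- m); split.
      + intros y Hy. assert (- y <= m) by (apply Hub; rewrite Ropp_involutive; auto). lra.
      + intros b Hb. assert (m <= - b); [|lra]. apply Hl. intros y Hy. specialize (Hb _ Hy). lra. }
  pose proof (epsilon_spec (inhabits 0) _ H) as [H1 _]. apply H1; auto.
Qed.

Lemma sum_nonneg_f f n : (forall i, 0 <= f i) -> 0 <= sum_f_R0 f n.
Proof. intros H; induction n; simpl; auto. specialize (H (S n)); lra. Qed.

Lemma inf_sum_nonneg f s : (forall i, 0 <= f i) -> infinite_sum f s -> 0 <= s.
Proof.
  intros Hf Hs. apply Rnot_lt_le; intro Hlt.
  destruct (Hs (- s)) as [N HN]; [lra|].
  specialize (HN N (le_n N)). pose proof (sum_nonneg_f f N Hf). unfold Rdist in HN.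
  rewrite Rabs_pos_eq in HN; lra.
Qed.

Lemma leb_nonneg_set (A : R -> Prop) s : (exists a b : nat -> R,
    (forall i, a i <= b i) /\ (forall x, A x -> exists i, a i < x < b i) /\
    infinite_sum (fun i => b i - a i) s) -> 0 <= s.
Proof. intros [a [b [Hab [_ Hs]]]]. apply (inf_sum_nonneg _ _ (fun i => Rge_le _ _ (Rge_minus _ _ (Rle_ge _ _ (Hab i)))) Hs). Qed.

Lemma inf_sum_const f c : (forall n, sum_f_R0 f n = c) -> infinite_sum f c.
Proof. intros H eps He. exists O. intros n _. rewrite H. unfold Rdist. rewrite Rminus_diag, Rabs_R0; auto. Qed.

Lemma leb_le2 (A : R -> Prop) : (forall x, A x -> 0 <= x < 1) -> lebesgue A <= 2.
Proof.
  intros HA. unfold lebesgue. apply Rinf_le; [|apply leb_nonneg_set].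
  exists (fun i => if Nat.eqb i 0 then -1 else 0), (fun i => if Nat.eqb i 0 then 1 else 0).
  split; [|split].
  - intros [|i]; simpl; lra.
  - intros x Hx. exists O. simpl. specialize (HA x Hx). lra.
  - apply inf_sum_const. induction n; simpl; [lra|]. rewrite IHn; lra.
Qed.

Lemma leb_le0 (A : R -> Prop) : (forall x, ~ A x) -> lebesgue A <= 0.
Proof.
  intros HA. unfold lebesgue. apply Rinf_le; [|apply leb_nonneg_set].
  exists (fun _ => 0), (fun _ => 0). split; [|split].
  - intros; lra.
  - intros y Hy; exfalso; eapply HA; eauto.
  - apply inf_sum_const. induction n; simpl; [lra|]. rewrite IHn; lra.
Qed.

Lemma lsum_prod {A B} (f : A * B -> R) xs ys :
  lsum f (list_prod xs ys) = lsum (fun x => lsum (fun y => f (x, y)) ys) xs.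
Proof.
  induction xs; [reflexivity|].
  change (list_prod (a::xs) ys) with (map (fun y => (a,y)) ys ++ list_prod xs ys).
  rewrite lsum_app, lsum_map, IHxs, lsum_cons. reflexivity.
Qed.

Lemma lsum_flat {A B} (f : A * B -> R) (L : A -> list B) xs :
  lsum f (flat_map (fun x => map (fun y => (x, y)) (L x)) xs) = lsum (fun x => lsum (fun y => f (x, y)) (L x)) xs.
Proof.
  induction xs; [reflexivity|].
  change (flat_map (fun x => map (fun y => (x, y)) (L x)) (a::xs)) with
    (map (fun y => (a, y)) (L a) ++ flat_map (fun x => map (fun y => (x, y)) (L x)) xs).
  rewrite lsum_app, lsum_map, IHxs, lsum_cons. reflexivity.
Qed.

Lemma nodup_flat {A B} (L : A -> list B) xs : NoDup xs -> (forall x, NoDup (L x)) ->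
  NoDup (flat_map (fun x => map (fun y => (x, y)) (L x)) xs).
Proof.
  induction xs as [|x xs IH]; intros Hnd HL; simpl; [constructor|].
  apply NoDup_cons_iff in Hnd as [Hx Hnd].
  apply NoDup_app; auto.
  - apply Injective_map_NoDup_in; auto. intros y y' _ _ [=]; auto.
  - intros [x1 y] H1 H2. apply in_map_iff in H1 as [y1 [[= <- <-] _]].
    apply in_flat_map in H2 as [x' [Hx' Hin]]. apply in_map_iff in Hin as [y2 [[= <- _] _]].
    contradiction.
Qed.

Section Main.
Context {X Y Z : Type} (PX : X -> R) (PZX : X -> Z -> R) (W : X -> Y -> R) (phi : X -> Z -> Y)
  (HPX : is_pmf PX) (HPZX : forall x, is_pmf (PZX x)) (HW : forall x, is_pmf (W x)).

Definition hh (pr : X * Y) : R := Rabs (joint PX W pr - joint_phi PX PZX phi pr).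

Lemma PX_nonneg x : 0 <= PX x.
Proof. destruct HPX as [H _]; auto. Qed.

Lemma hh_eq x y : hh (x, y) = PX x * Rabs (W x y - Qf (PZX x) (phi x) y).
Proof.
  unfold hh, joint, joint_phi; simpl. rewrite <- Rmult_minus_distr_l, Rabs_mult.
  rewrite (Rabs_pos_eq (PX x)) by apply PX_nonneg. reflexivity.
Qed.

Lemma vdist_has : has_tsum hh (vdist (joint PX W) (joint_phi PX PZX phi)).
Proof.
  apply (tsum_exists _ 2). intros l Hl.
  destruct (nodup_exists (map fst l) (fun _ => True)) as [xs [Hxs Hixs]].
  destruct (nodup_exists (map snd l) (fun _ => True)) as [ys [Hys Hiys]].
  set (G := fun pr : X * Y => PX (fst pr) * (W (fst pr) (snd pr) + Qf (PZX (fst pr)) (phi (fst pr)) (snd pr))).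
  assert (HG : forall pr, 0 <= G pr).
  { intros [x y]; unfold G; simpl. apply Rmult_le_pos; [apply PX_nonneg|].
    destruct (HW x) as [Hw _]. pose proof (Q_nonneg (PZX x) (phi x) (HPZX x) y). specialize (Hw y). lra. }
  apply Rle_trans with (lsum G l).
  { apply lsum_le. intros [x y] _. rewrite hh_eq. unfold G; simpl.
    apply Rmult_le_compat_l; [apply PX_nonneg|].
    destruct (HW x) as [Hw _]. pose proof (Q_nonneg (PZX x) (phi x) (HPZX x) y). specialize (Hw y).
    eapply Rle_trans; [apply Rabs_triang|]. rewrite Rabs_Ropp, !Rabs_pos_eq; lra. }
  apply Rle_trans with (lsum G (list_prod xs ys)).
  { apply lsum_incl_pos; auto. intros [x y] Hin _. apply in_prod_iff. split.
    - apply Hixs; split; auto. change x with (fst (x, y)); apply in_map; auto.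
    - apply Hiys; split; auto. change y with (snd (x, y)); apply in_map; auto. }
  rewrite lsum_prod. unfold G; simpl.
  apply Rle_trans with (lsum (fun x => 2 * PX x) xs).
  { apply lsum_le. intros x _. rewrite lsum_scal, lsum_plus.
    rewrite Rmult_comm. apply Rmult_le_compat_r; [apply PX_nonneg|].
    pose proof (pmf_le1 (W x) ys (HW x) Hys). pose proof (Q_sum_le1 (PZX x) (phi x) (HPZX x) ys Hys). lra. }
  rewrite lsum_scal. pose proof (pmf_le1 PX xs HPX Hxs). lra.
Qed.

Lemma main_n eps gamma : 0 < eps < 1 -> 0 < gamma ->
  let F := fun x => PX x * lebesgue (fun delta => 0 <= delta < 1 - eps /\
        cfun (PZX x) (delta + eps) - cfun (W x) delta < - gamma) in
  0 <= tsum F /\ tsum F <= (2 / ((1 - exp (- gamma)) * eps)) * vdist (joint PX W) (joint_phi PX PZX phi).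
Proof.
  intros He Hg F.
  set (c := (1 - exp (- gamma)) * eps).
  assert (Hc : 0 < c).
  { unfold c. apply Rmult_lt_0_compat; [|lra].
    assert (exp (- gamma) < 1) by (rewrite <- exp_0; apply exp_increasing; lra). lra. }
  set (V := vdist (joint PX W) (joint_phi PX PZX phi)).
  assert (Hx : forall x, exists L, NoDup L /\ F x <= 2 / c * lsum (fun y => hh (x, y)) L).
  { intros x. unfold F.
    destruct (classic (exists d, 0 <= d < 1 - eps /\
        cfun (PZX x) (d + eps) - cfun (W x) d < - gamma)) as [[d [Hd Hcd]]|Hn].
    - destruct (key (PZX x) (W x) (phi x) eps gamma d (HPZX x) (HW x)) as [L [HL HLs]]; auto; try lra.
      exists L; split; auto.
      rewrite (lsum_ext _ (fun y => PX x * Rabs (W x y - Qf (PZX x) (phi x) y))) by (intros; apply hh_eq).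
      rewrite lsum_scal. fold c in HLs.
      apply Rle_trans with (PX x * 2).
      { apply Rmult_le_compat_l; [apply PX_nonneg|]. apply leb_le2. intros; lra. }
      assert (PX x * c <= PX x * lsum (fun y => Rabs (W x y - Qf (PZX x) (phi x) y)) L)
        by (apply Rmult_le_compat_l; [apply PX_nonneg|auto]).
      apply Rmult_le_compat_l with (r := 2 / c) in H; [|unfold Rdiv; apply Rmult_le_pos; [lra|left; apply Rinv_0_lt_compat; auto]].
      replace (2 / c * (PX x * c)) with (PX x * 2) in H; [auto|field; lra].
    - exists []; split; [constructor|]. rewrite lsum_nil, Rmult_0_r.
      eapply Rle_trans; [apply Rmult_le_compat_l; [apply PX_nonneg|apply leb_le0]|].
      + intros d Hd; apply Hn; eauto.
      + rewrite Rmult_0_r; lra. }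
  set (Lf := fun x => epsilon (inhabits []) (fun L => NoDup L /\ F x <= 2 / c * lsum (fun y => hh (x, y)) L)).
  assert (HLf : forall x, NoDup (Lf x) /\ F x <= 2 / c * lsum (fun y => hh (x, y)) (Lf x)).
  { intros x. apply (epsilon_spec (inhabits []) (fun L => NoDup L /\ F x <= 2 / c * lsum (fun y => hh (x, y)) L)); auto. }
  assert (Hbound : forall l, NoDup l -> lsum F l <= 2 / c * V).
  { intros l Hl. apply Rle_trans with (lsum (fun x => 2 / c * lsum (fun y => hh (x, y)) (Lf x)) l).
    { apply lsum_le; intros; apply HLf. }
    rewrite lsum_scal, <- lsum_flat. apply Rmult_le_compat_l.
    { unfold Rdiv; apply Rmult_le_pos; [lra|left; apply Rinv_0_lt_compat; auto]. }
    apply has_tsum_le; [apply vdist_has|]. apply nodup_flat; auto. intros; apply HLf. }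
  pose proof (tsum_exists F _ Hbound) as Hts.
  split; [eapply has_tsum_nonneg; eauto|]. apply (has_tsum_least F); auto.
Qed.

Lemma vdist_nonneg : 0 <= vdist (joint PX W) (joint_phi PX PZX phi).
Proof. eapply has_tsum_nonneg, vdist_has. Qed.
End Main.

Theorem theorem5 (X Y Z : nat -> Type)
  (HX : forall n, countable (X n)) (HY : forall n, countable (Y n))
  (HZ : forall n, countable (Z n))
  (PX : forall n, X n -> R) (PZX : forall n, X n -> Z n -> R)
  (W : forall n, X n -> Y n -> R)
  (HPX : forall n, is_pmf (PX n))
  (HPZX : forall n x, is_pmf (PZX n x))
  (HW : forall n x, is_pmf (W n x))
  (Happrox : approximating_source X Y Z PX PZX W) :
  forall eps gamma : R, 0 < eps < 1 -> 0 < gamma ->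
  Un_cv (fun n => tsum (fun x : X n =>
     PX n x * lebesgue (fun delta => 0 <= delta < 1 - eps /\
        cfun (PZX n x) (delta + eps) - cfun (W n x) delta < - gamma))) 0.
Proof.
  intros eps gamma He Hg. destruct Happrox as [phi Hcv]. intros e He'.
  set (c := (1 - exp (- gamma)) * eps).
  assert (Hc : 0 < c).
  { unfold c. apply Rmult_lt_0_compat; [|lra].
    assert (exp (- gamma) < 1) by (rewrite <- exp_0; apply exp_increasing; lra). lra. }
  destruct (Hcv (e * c / 2)) as [N HN].
  { apply Rmult_lt_0_compat; [apply Rmult_lt_0_compat|]; lra. }
  exists N. intros n Hn. specialize (HN n Hn).
  pose proof (main_n (PX n) (PZX n) (W n) (phi n) (HPX n) (HPZX n) (HW n) eps gamma He Hg) as H.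
  cbv zeta in H. destruct H as [H0 H1]. fold c in H1.
  pose proof (vdist_nonneg (PX n) (PZX n) (W n) (phi n) (HPX n) (HPZX n) (HW n)) as Hv.
  unfold R_dist in *. rewrite Rminus_0_r in *. rewrite Rabs_pos_eq in * by auto.
  assert (2 / c * vdist (joint (PX n) (W n)) (joint_phi (PX n) (PZX n) (phi n)) < 2 / c * (e * c / 2)).
  { apply Rmult_lt_compat_l; auto. unfold Rdiv; apply Rmult_lt_0_compat; [lra|apply Rinv_0_lt_compat; auto]. }
  replace (2 / c * (e * c / 2)) with e in H by (field; lra). lra.
Qed.
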